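(* Let $C$ be a binary $[n,k]$ code with $C^\perp\neq\{\bm 0\}$ and $d^\perp:=d(C^\perp)\ge 3$. If $C$ is monomially equivalent to a dual Hamming code, or if $k=n-1$ and $d^\perp=n$ is odd, then $\gamma(C)=k-d^\perp+3$. Otherwise $\gamma(C)\le k-d^\perp+2$.
   Context: An $[n,k]$ code over $\mathbb{F}_q$ is a $k$-dimensional subspace $C\subseteq\mathbb{F}_q^n$; binary means $q=2$; write $E=\{1,\dots,n\}$. For $\bm{x}\in\mathbb{F}_q^n$, $\mathrm{supp}(\bm{x})=\{i: x_i\neq 0\}$ and the weight is $|\mathrm{supp}(\bm{x})|$; for $B\subseteq\mathbb{F}_q^n$, $\mathrm{Supp}(B)=\bigcup_{\bm{x}\in B}\mathrm{supp}(\bm{x})$. $C^\perp$ is the dual code with respect to the standard inner product and $d(C^\perp)$ is the minimum weight of a nonzero codeword of $C^\perp$. The covering dimension is $\gamma(C)=\infty$ if $\mathrm{Supp}(C)\neq E$, and otherwise $\gamma(C)$ is the least positive integer $r$ such that $C$ has an $r$-dimensional subspace $D$ with $\mathrm{Supp}(D)=E$. A dual Hamming code is an $[(q^k-1)/(q-1),k]$ code over $\mathbb{F}_q$ with a generator matrix whose columns consist of exactly one nonzero vector from each one-dimensional subspace of $\mathbb{F}_q^k$. Two codes are monomially equivalent if one is obtained from the other by permuting coordinates and multiplying coordinates by nonzero scalars. *)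

(* Defs.v *)
From HB Require Import structures.
From mathcomp Require Import all_boot all_order all_algebra all_fingroup.
Set Implicit Arguments. Unset Strict Implicit. Unset Printing Implicit Defensive.
Import GRing.Theory.
Local Open Scope ring_scope.

Definition supp n (x : 'rV['F_2]_n) : {set 'I_n} := [set i | x 0 i != 0].

Definition wt n (x : 'rV['F_2]_n) : nat := #|supp x|.

Definition Supp n (B : {vspace 'rV['F_2]_n}) : {set 'I_n} :=
  [set i | [exists x : 'rV['F_2]_n, (x \in B) && (x 0 i != 0)]].

Definition in_dual n (C : {vspace 'rV['F_2]_n}) (y : 'rV['F_2]_n) : bool :=
  [forall x : 'rV['F_2]_n, (x \in C) ==> (\sum_i x 0 i * y 0 i == 0)].

Definition dual_min_dist n (C : {vspace 'rV['F_2]_n}) (d : nat) : Prop :=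
  (exists y, [/\ in_dual C y, y != 0 & wt y = d]) /\
  (forall y, in_dual C y -> y != 0 -> (d <= wt y)%N).

(* covering_dim C r : gamma(C) = r (finite). gamma(C) = infinity iff no r satisfies it. *)
Definition covering_dim n (C : {vspace 'rV['F_2]_n}) (r : nat) : Prop :=
  [/\ Supp C = [set: 'I_n], (0 < r)%N,
      (exists D : {vspace 'rV['F_2]_n}, [/\ (D <= C)%VS, \dim D = r & Supp D = [set: 'I_n]]) &
      (forall D : {vspace 'rV['F_2]_n}, (D <= C)%VS -> (0 < \dim D)%N ->
          Supp D = [set: 'I_n] -> (r <= \dim D)%N)].

(* binary dual Hamming code of length n, dimension m: generated by the rows of a
   generator matrix G whose columns are exactly the nonzero vectors of F_2^m, each
   once (over F_2 each 1-dim subspace has exactly one nonzero vector). *)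
Definition dual_Hamming n (H : {vspace 'rV['F_2]_n}) : Prop :=
  exists (m : nat) (G : 'M['F_2]_(m, n)),
    [/\ n = (2 ^ m - 1)%N,
        H = <<[seq row i G | i : 'I_m]>>%VS,
        (forall j, col j G != 0),
        injective (fun j => col j G) &
        (forall v : 'cV['F_2]_m, v != 0 -> exists j, col j G = v)].

Definition permute n (s : 'S_n) (x : 'rV['F_2]_n) : 'rV['F_2]_n := \row_j x 0 (s j).

(* monomial equivalence over F_2 (nonzero scalars are all 1: only permutations) *)
Definition mon_equiv n (C H : {vspace 'rV['F_2]_n}) : Prop :=
  exists s : 'S_n, forall x, (x \in C) = (permute s x \in H).

(* Main.v *)
Require Import Defs.
From HB Require Import structures.
From mathcomp Require Import all_boot all_order all_algebra all_fingroup all_field.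
From Stdlib Require Import Classical Lia.
From mathcomp Require Import zify.
Set Implicit Arguments. Unset Strict Implicit. Unset Printing Implicit Defensive.
Import GRing.Theory.
Local Open Scope ring_scope.

Lemma F2_cases (a : 'F_2) : a = 0 \/ a = 1.
Proof. case: a => m Hm. move: Hm. case: m => [|[|m]] Hm.
- by left; apply: val_inj.
- by right; apply: val_inj.
- by []. Qed.
Lemma F2_11 : (1 + 1 : 'F_2) = 0. Proof. apply: val_inj. reflexivity. Qed.
Lemma F2_10 : (1 : 'F_2) != 0. Proof. reflexivity. Qed.
Lemma F2_add (a : 'F_2) : a + a = 0.
Proof. case: (F2_cases a) => ->; [exact: addr0 | exact: F2_11]. Qed.
Lemma F2_nat m : (m%:R : 'F_2) = (odd m)%:R.
Proof. elim: m => // m IH. rewrite -[m.+1]addn1 natrD IH oddD /=. case: (odd m) => /=. exact: F2_11. by rewrite add0r. Qed.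
Lemma F2_neq0 (a : 'F_2) : a != 0 -> a = 1.
Proof. by case: (F2_cases a) => ->. Qed.

Definition dot n (x y : 'rV['F_2]_n) : 'F_2 := \sum_i x 0 i * y 0 i.
Definition ind n (B : {set 'I_n}) : 'rV['F_2]_n := \row_j (j \in B)%:R.

Lemma in_dualP n (C : {vspace 'rV['F_2]_n}) y :
  reflect (forall x, x \in C -> dot x y = 0) (in_dual C y).
Proof.
apply: (iffP forallP) => [H x xC | H x]; first by have := H x; rewrite xC => /eqP.
by apply/implyP => xC; apply/eqP; exact: H.
Qed.

Lemma dot_mx n (x y : 'rV['F_2]_n) : dot x y = (x *m y^T) 0 0.
Proof. by rewrite !mxE; apply: eq_bigr => i _; rewrite mxE. Qed.

Lemma dotDr n (x y z : 'rV['F_2]_n) : dot x (y + z) = dot x y + dot x z.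
Proof. by rewrite /dot -big_split; apply: eq_bigr => i _; rewrite mxE mulrDr. Qed.

Lemma dotC n (x y : 'rV['F_2]_n) : dot x y = dot y x.
Proof. by apply: eq_bigr => i _; rewrite mulrC. Qed.

Lemma dot0r n (x : 'rV['F_2]_n) : dot x 0 = 0.
Proof. by rewrite /dot big1 // => i _; rewrite mxE mulr0. Qed.

Lemma in_dualD n (C : {vspace 'rV['F_2]_n}) y z :
  in_dual C y -> in_dual C z -> in_dual C (y + z).
Proof. move=> /in_dualP Hy /in_dualP Hz; apply/in_dualP => x xC. by rewrite dotDr Hy ?Hz ?addr0. Qed.

Lemma in_dual0 n (C : {vspace 'rV['F_2]_n}) : in_dual C 0.
Proof. by apply/in_dualP => x _; rewrite dot0r. Qed.

Lemma in_dualS n (C D : {vspace 'rV['F_2]_n}) y :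
  (D <= C)%VS -> in_dual C y -> in_dual D y.
Proof. move=> /subvP sDC /in_dualP H; apply/in_dualP => x xD; exact: H (sDC _ xD). Qed.

Definition rep n (W : {vspace 'rV['F_2]_n}) m (N : 'M['F_2]_(m, n)) :=
  forall x, (x \in W) = (x <= N)%MS.

Definition bmx n (W : {vspace 'rV['F_2]_n}) : 'M['F_2]_(\dim W, n) :=
  \matrix_(i < \dim W) (vbasis W)`_i.

Lemma bmx_rep n (W : {vspace 'rV['F_2]_n}) : rep W (bmx W).
Proof.
move=> x; apply/idP/idP => [xW | /submxP[u ->]].
  apply/submxP; exists (\row_i coord (vbasis W) i x).
  rewrite mulmx_sum_row {1}(coord_vbasis xW); apply: eq_bigr => i _.
  by rewrite rowK mxE.
rewrite mulmx_sum_row; apply: memv_suml => i _; apply: memvZ.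
by rewrite rowK; apply: vbasis_mem; apply: mem_nth; rewrite size_tuple.
Qed.

Lemma bmx_rank n (W : {vspace 'rV['F_2]_n}) : \rank (bmx W) = \dim W.
Proof.
apply/eqP; change (row_free (bmx W)); apply: inj_row_free => v.
rewrite mulmx_sum_row => H.
have := (freeP (basis_free (vbasisP W))) (fun i => v 0 i).
move=> /(_ _) Hk; apply/rowP => i; rewrite mxE Hk //.
transitivity (\sum_i v 0 i *: row i (bmx W)); last exact H.
by apply: eq_bigr => j _; rewrite rowK.
Qed.

Lemma dim_bridge n (W : {vspace 'rV['F_2]_n}) m (N : 'M['F_2]_(m, n)) :
  rep W N -> \dim W = \rank N.
Proof.
move=> HW; rewrite -bmx_rank; apply: eqmx_rank; apply/andP; split.
  apply/row_subP => i; rewrite -HW bmx_rep; exact: row_sub.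
apply/row_subP => i; rewrite -bmx_rep HW; exact: row_sub.
Qed.

Lemma rows_rep n m (N : 'M['F_2]_(m, n)) : rep <<[seq row i N | i : 'I_m]>>%VS N.
Proof.
move=> x; apply/idP/idP => [xW | /submxP[u ->]].
  rewrite (coord_span xW); apply: summx_sub => i _; apply: scalemx_sub.
  set X := image_tuple _ _.
  have : X`_i \in X by rewrite mem_nth // size_tuple.
  by case/imageP => j _ ->; exact: row_sub.
rewrite mulmx_sum_row; apply: memv_suml => i _; apply: memvZ.
apply: memv_span; apply: map_f; exact: mem_enum.
Qed.

Lemma rep_dual n (C : {vspace 'rV['F_2]_n}) m (N : 'M['F_2]_(m, n)) y :
  rep C N -> in_dual C y = (y *m N^T == 0).
Proof.
move=> HC; apply/in_dualP/eqP => [H | H x].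
  apply/rowP => i; rewrite !mxE.
  transitivity (dot (row i N) y); last by apply: H; rewrite HC row_sub.
  by rewrite /dot; apply: eq_bigr => j _; rewrite !mxE mulrC.
rewrite HC => /submxP[u ->]; rewrite dot_mx -mulmxA.
have -> : N *m y^T = (y *m N^T)^T by rewrite trmx_mul trmxK.
by rewrite H trmx0 mulmx0 mxE.
Qed.
Lemma mul_kerT m n (A : 'M['F_2]_(m,n)) : A *m (kermx A^T)^T = 0.
Proof. apply: trmx_inj. rewrite trmx_mul trmxK trmx0. exact: mulmx_ker. Qed.

Lemma perp_strict n (C D : {vspace 'rV['F_2]_n}) :
  (D <= C)%VS -> (\dim D < \dim C)%N -> exists y, in_dual D y /\ ~~ in_dual C y.
Proof.
move=> sDC ltDC.
set KD := kermx (bmx D)^T; set KC := kermx (bmx C)^T.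
have rKD : \rank KD = (n - \dim D)%N by rewrite mxrank_ker mxrank_tr bmx_rank.
have rKC : \rank KC = (n - \dim C)%N by rewrite mxrank_ker mxrank_tr bmx_rank.
have dCn : (\dim C <= n)%N by rewrite -bmx_rank rank_leq_col.
have : ~~ (KD <= KC)%MS.
  apply/negP => /mxrankS; rewrite rKD rKC => H.
  have : (n - \dim D <= n - \dim C)%N := H. lia.
case/row_subPn => i Hi; exists (row i KD); split.
  by rewrite (rep_dual _ (bmx_rep D)) -sub_kermx row_sub.
by rewrite (rep_dual _ (bmx_rep C)) -sub_kermx.
Qed.

Definition maskmx n (B : {set 'I_n}) : 'M['F_2]_n :=
  \matrix_(i, j) ((i == j) && (i \notin B))%:R.

Lemma mulmx_mask n (B : {set 'I_n}) (u : 'rV['F_2]_n) j :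
  (u *m maskmx B) 0 j = u 0 j * (j \notin B)%:R.
Proof.
rewrite mxE (bigD1 j) //= big1 ?addr0 => [|l /negbTE Hl]; rewrite !mxE ?eqxx //.
by rewrite Hl mulr0.
Qed.

Lemma proj_lemma n (C : {vspace 'rV['F_2]_n}) (B : {set 'I_n}) t :
  (forall y, in_dual C y -> (forall j, j \notin B -> y 0 j = 0) -> dot t y = 0) ->
  exists2 x, x \in C & forall j, j \in B -> x 0 j = t 0 j.
Proof.
move=> Ht.
set P := maskmx B.
set N := col_mx (bmx C) P.
set K := kermx N^T.
set K2 := kermx K^T.
have sNK2 : (N <= K2)%MS.
  by rewrite sub_kermx /K mul_kerT.
have rN : (\rank N <= n)%N by exact: rank_leq_col.
have rK2 : \rank K2 = \rank N.
  rewrite mxrank_ker mxrank_tr mxrank_ker mxrank_tr. lia.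
have eNK2 : (N == K2)%MS by rewrite -(mxrank_leqif_eq sNK2).2 rK2.
have tK2 : (t <= K2)%MS.
  rewrite sub_kermx; apply/eqP/rowP => i; rewrite !mxE.
  have yN : row i K *m N^T = 0 by rewrite -row_mul mulmx_ker row0.
  move: yN; rewrite /N tr_col_mx mul_mx_row => /eqP; rewrite row_mx_eq0 => /andP[/eqP y1 /eqP y2].
  transitivity (dot t (row i K)).
    by apply: eq_bigr => j _; rewrite !mxE.
  apply: Ht.
    by rewrite (rep_dual _ (bmx_rep C)) y1.
  move=> j jB.
  have : (row i K *m P^T) 0 j = 0 by rewrite y2 mxE.
  rewrite mxE (bigD1 j) //= big1 ?addr0 => [|l /negbTE Hl]; rewrite !mxE ?eqxx ?jB ?mulr1 //.
  by rewrite eq_sym Hl mulr0.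
have : (t <= N)%MS by rewrite (eqmxP eNK2).
case/submxP => u tu.
exists (lsubmx u *m bmx C); first by rewrite bmx_rep submxMl.
have E2 : u *m N = lsubmx u *m bmx C + rsubmx u *m P by rewrite -{1}(hsubmxK u) mul_row_col.
move=> j jB; rewrite tu E2 [RHS]mxE [X in _ = _ + X]mulmx_mask jB mulr0 addr0.
by [].
Qed.

Lemma F2_boolR (b : bool) : ((b%:R : 'F_2) != 0) = b.
Proof. by case: b. Qed.

Lemma supp_ind n (B : {set 'I_n}) : supp (ind B) = B.
Proof. by apply/setP => j; rewrite inE mxE F2_boolR. Qed.

Lemma wt_ind n (B : {set 'I_n}) : wt (ind B) = #|B|.
Proof. by rewrite /wt supp_ind. Qed.

Lemma ind_supp n (y : 'rV['F_2]_n) : y = ind (supp y).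
Proof.
apply/rowP => j; rewrite !mxE inE.
by case: (F2_cases (y 0 j)) => ->.
Qed.

Lemma wt_eq0 n (y : 'rV['F_2]_n) : wt y = 0%N -> y = 0.
Proof.
move/eqP; rewrite cards_eq0 => /eqP H.
by rewrite (ind_supp y) H; apply/rowP => j; rewrite !mxE inE.
Qed.

Lemma dot_ind n (x : 'rV['F_2]_n) B : dot x (ind B) = \sum_(j in B) x 0 j.
Proof.
rewrite /dot (bigID (fun j => j \in B)) /= [X in _ + X]big1 ?addr0.
  by apply: eq_bigr => j jB; rewrite mxE jB mulr1.
by move=> j /negbTE jB; rewrite mxE jB mulr0.
Qed.

Lemma dot_ind_ind n (B : {set 'I_n}) : dot (ind B) (ind B) = (odd #|B|)%:R.
Proof.
rewrite dot_ind -F2_nat (eq_bigr (fun _ => 1)) ?sumr_const // => j jB.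
by rewrite mxE jB.
Qed.

Lemma minW n (C : {vspace 'rV['F_2]_n}) d y :
  dual_min_dist C d -> in_dual C y -> y != 0 -> (d <= wt y)%N.
Proof. by case=> _ H; exact: H. Qed.

Lemma small n (C : {vspace 'rV['F_2]_n}) d (B : {set 'I_n}) y :
  dual_min_dist C d -> in_dual C y -> (forall j, j \notin B -> y 0 j = 0) ->
  (#|B| <= d)%N -> y != 0 -> y = ind B /\ #|B| = d.
Proof.
move=> Hd Hy HB Bd y0.
have dy := minW Hd Hy y0.
have sB : supp y \subset B.
  apply/subsetP => j; rewrite inE; apply: contraR => jB; rewrite HB //.
have le1 := subset_leq_card sB.
have dy' : (d <= #|supp y|)%N := dy.
have eB : supp y = B.
  apply/eqP; rewrite eqEcard sB /=. exact: leq_trans Bd dy'.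
split; first by rewrite {1}(ind_supp y) eB.
move: dy' le1; rewrite eB; lia.
Qed.

Lemma sum_delta n (x : 'rV['F_2]_n) j : \sum_i x 0 i * (i == j)%:R = x 0 j.
Proof.
rewrite (bigD1 j) //= eqxx mulr1 big1 ?addr0 // => i /negbTE ->; by rewrite mulr0.
Qed.

Definition Qmx n (A : {set 'I_n}) (a0 : 'I_n) : 'M['F_2]_n :=
  \matrix_(i, j) (if (j \in A) && (j != a0) then ((i == j)%:R + (i == a0)%:R) else 0).

Lemma Qmx_E n A a0 (x : 'rV['F_2]_n) j :
  (x *m Qmx A a0) 0 j = if (j \in A) && (j != a0) then x 0 j + x 0 a0 else 0.
Proof.
rewrite mxE; case: ifP => H.
  rewrite -(sum_delta x j) -(sum_delta x a0) -big_split /=.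
  by apply: eq_bigr => i _; rewrite mxE H mulrDr.
by rewrite big1 // => i _; rewrite mxE H mulr0.
Qed.

Definition unitmx n m (g : 'I_m -> 'I_n) : 'M['F_2]_(m, n) :=
  \matrix_(i, j) (g i == j)%:R.

Lemma unitmx_rank n m (g : 'I_m -> 'I_n) : injective g -> \rank (unitmx g) = m.
Proof.
move=> ginj; apply/eqP; change (row_free (unitmx g)); apply: inj_row_free => v H.
apply/rowP => i; have := congr1 (fun M : 'rV_n => M 0 (g i)) H; rewrite !mxE.
move=> <-; apply/esym.
rewrite (bigD1 i) //= big1 ?addr0; first by rewrite mxE eqxx mulr1.
move=> l /negbTE Hl; rewrite mxE.
by rewrite (inj_eq ginj) Hl mulr0.
Qed.

Lemma cons n (C : {vspace 'rV['F_2]_n}) d (A : {set 'I_n}) a0 :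
  dual_min_dist C d -> a0 \in A -> (#|A| < d)%N ->
  (forall i, i \notin A -> #|i |: A| = d -> in_dual C (ind (i |: A)) -> ~~ odd d) ->
  exists D : {vspace 'rV['F_2]_n},
    [/\ (D <= C)%VS, (\dim D + #|A| <= \dim C + 1)%N & Supp D = [set: 'I_n]].
Proof.
move=> Hd a0A Ad HA.
set Q := Qmx A a0.
set f : 'End('rV['F_2]_n) := linfun (mulmxr Q).
have fE x : f x = x *m Q by rewrite lfunE.
exists (C :&: lker f)%VS; split; first exact: capvSl.
  have Hk := limg_ker_dim f C.
  set A' := A :\ a0.
  have cA : #|A| = (#|A'| + 1)%N by rewrite (cardsD1 a0 A) a0A addnC.
  set N := unitmx (@enum_val _ (mem A')).
  have rN : \rank N = #|A'| by apply: unitmx_rank; exact: enum_val_inj.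
  have dV := dim_bridge (rows_rep N).
  have sV : (<<[seq row i N | i : 'I_#|A'|]>> <= f @: C)%VS.
    apply/span_subvP => v /mapP[i _ ->].
    set j := enum_val i.
    have jA' : j \in A' by exact: enum_valP.
    have Hp : forall y, in_dual C y -> (forall l, l \notin A -> y 0 l = 0) ->
        dot (delta_mx 0 j) y = 0.
      move=> y Hy HyA; case: (eqVneq y 0) => [->|y0]; first by rewrite dot0r.
      have [_ ] := small Hd Hy HyA (ltnW Ad) y0; lia.
    have [x xC Hx] := proj_lemma Hp.
    apply/memv_imgP; exists x => //; rewrite fE; apply/rowP => l.
    rewrite Qmx_E !mxE.
    move: jA'; rewrite !inE => /andP[ja0 jA].
    case: ifP => [/andP[lA la0] | H].
      rewrite Hx // Hx // !mxE eqxx /= -/j [a0 == j]eq_sym (negbTE ja0) addr0.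
      by rewrite eq_sym.
    rewrite -/j; case: eqP => // jl; move: H; rewrite -jl jA ja0.
    by [].
  have := dimvS sV; rewrite dV rN => H.
  by rewrite cA -Hk addnA leq_add2r leq_add2l.
apply/setP => i; rewrite !inE; apply/existsP.
have Hp : forall y, in_dual C y -> (forall l, l \notin (i |: A) -> y 0 l = 0) ->
    dot (ind (i |: A)) y = 0.
  move=> y Hy HyB; case: (eqVneq y 0) => [->|y0]; first by rewrite dot0r.
  have cB : (#|i |: A| <= d)%N.
    by rewrite cardsU1; case: (i \in A) => /=; rewrite ?add0n ?add1n; [exact: ltnW | exact: Ad].
  have [ey eB] := small Hd Hy HyB cB y0.
  have iA : i \notin A.
    apply/negP => iA; move: eB; rewrite cardsU1 iA /= add0n => E; by move: Ad; rewrite E ltnn.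
  have Hy' : in_dual C (ind (i |: A)) by rewrite -ey.
  have Hodd := HA i iA eB Hy'.
  rewrite ey dot_ind_ind eB.
  by move: Hodd; case: (odd d).
have [x xC Hx] := proj_lemma Hp.
exists x; rewrite memv_cap xC /= Hx ?setU11 // mxE setU11 /= andbT.
rewrite memv_ker fE; apply/eqP/rowP => l; rewrite Qmx_E mxE.
case: ifP => // /andP[lA _]; rewrite !Hx ?inE ?lA ?a0A ?orbT // !mxE !inE lA a0A !orbT.
exact: F2_11.
Qed.

Lemma sum3 (R : nmodType) n (F : 'I_n -> R) a b c :
  a != b -> a != c -> b != c ->
  \sum_(j in [set a; b; c]) F j = F a + F b + F c.
Proof.
move=> ab ac bc.
have -> : [set a; b; c] = a |: (b |: [set c]) by apply/setP => x; rewrite !inE orbA.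
rewrite big_setU1 /=; last by rewrite !inE negb_or ab ac.
rewrite big_setU1 /=; last by rewrite !inE.
by rewrite big_set1 addrA.
Qed.

Definition steiner n (C : {vspace 'rV['F_2]_n}) :=
  forall a b : 'I_n, a != b ->
    exists c, [/\ c != a, c != b & in_dual C (ind [set a; b; c])].

Lemma Supp_mono n (D C : {vspace 'rV['F_2]_n}) : (D <= C)%VS -> Supp D \subset Supp C.
Proof.
move=> /subvP sDC; apply/subsetP => i; rewrite !inE => /existsP[x /andP[xD xi]].
by apply/existsP; exists x; rewrite sDC.
Qed.

Lemma Supp_dual n (D : {vspace 'rV['F_2]_n}) i :
  Supp D = [set: 'I_n] -> ~~ in_dual D (ind [set i]).
Proof.
move=> SD; apply/negP => /in_dualP H.
have : i \in Supp D by rewrite SD.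
rewrite inE => /existsP[x /andP[xD]].
have E : dot x (ind [set i]) = x 0 i by rewrite dot_ind big_set1.
by rewrite -E H // eqxx.
Qed.

Lemma cov_pos n (D : {vspace 'rV['F_2]_n}) :
  (0 < n)%N -> Supp D = [set: 'I_n] -> (0 < \dim D)%N.
Proof.
move=> n0 SD; rewrite lt0n dimv_eq0; apply/negP => /eqP D0.
have : Ordinal n0 \in Supp D by rewrite SD in_setT.
rewrite inE => /existsP[x /andP[]]; rewrite D0 memv0 => /eqP ->.
by rewrite mxE eqxx.
Qed.

Lemma min_cov n (C : {vspace 'rV['F_2]_n}) (D0 : {vspace 'rV['F_2]_n}) :
  (0 < n)%N -> (D0 <= C)%VS -> Supp D0 = [set: 'I_n] ->
  exists r, covering_dim C r /\ (r <= \dim D0)%N.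
Proof.
move=> n0; move: {2}(\dim D0) (leqnn (\dim D0)) => m.
elim: m D0 => [|m IH] D0 Hm sDC SD.
  by move: (cov_pos n0 SD); rewrite leqn0 in Hm; rewrite (eqP Hm).
have SC : Supp C = [set: 'I_n].
  by apply/eqP; rewrite eqEsubset subsetT /= -{1}SD Supp_mono.
case: (classic (forall D, (D <= C)%VS -> (0 < \dim D)%N -> Supp D = [set: 'I_n] ->
                  (\dim D0 <= \dim D)%N)) => [Hall | Hnot].
  exists (\dim D0); split => //; split => //; first exact: cov_pos.
  by exists D0.
have [D HD] : exists D, ~ ((D <= C)%VS -> (0 < \dim D)%N -> Supp D = [set: 'I_n] ->
                  (\dim D0 <= \dim D)%N).
  by apply: not_all_ex_not.
have sD : (D <= C)%VS by apply: NNPP => H; apply: HD => /H.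
have SD' : Supp D = [set: 'I_n] by apply: NNPP => H; apply: HD => _ _ /H.
have lt : (\dim D < \dim D0)%N.
  rewrite ltnNge; apply/negP => H; apply: HD => _ _ _; exact: H.
have [r [Hr Hr2]] := IH D (leq_trans (leq_trans lt Hm) (leqnn _)) sD SD'.
exists r; split => //; apply: leq_trans Hr2 (ltnW lt).
Qed.
Lemma F2mx_add m p (v : 'M['F_2]_(m, p)) : v + v = 0.
Proof. by apply/matrixP => i j; rewrite !mxE F2_add. Qed.


Lemma reduce n (C D : {vspace 'rV['F_2]_n}) : (D <= C)%VS -> steiner C ->
  forall y, in_dual D y -> ~~ in_dual C y -> exists i, in_dual D (ind [set i]).
Proof.
move=> sDC HS y; move: {2}(wt y) (leqnn (wt y)) => m.
elim: m y => [|m IH] y Hm HyD HyC.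
  by move: Hm; rewrite leqn0 => /eqP /wt_eq0 y0; move: HyC; rewrite y0 in_dual0.
case: (ltnP (wt y) 2) => H2.
  case: (posnP (wt y)) => [/wt_eq0 y0 | H1].
    by move: HyC; rewrite y0 in_dual0.
  have : #|supp y| == 1%N by rewrite -/(wt y) eqn_leq H1 -ltnS H2.
  case/cards1P => i Hi; exists i; by rewrite -Hi -ind_supp.
have [a aS] : exists a, a \in supp y.
  by apply/card_gt0P; rewrite -/(wt y); apply: leq_trans H2.
have [b bS] : exists b, b \in supp y :\ a.
  apply/card_gt0P; have := cardsD1 a (supp y); rewrite aS -/(wt y) => E.
  by move: H2; rewrite E add1n ltnS.
have ba : b != a by move: bS; rewrite !inE => /andP[].
have bS' : b \in supp y by move: bS; rewrite !inE => /andP[].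
have ab : a != b by rewrite eq_sym.
have [c [ca cb Hw]] := HS a b ab.
set w := ind [set a; b; c].
have HwD : in_dual D w := in_dualS sDC Hw.
have ya : y 0 a = 1 by apply: F2_neq0; move: aS; rewrite inE.
have yb : y 0 b = 1 by apply: F2_neq0; move: bS'; rewrite inE.
have sub : supp (y + w) \subset c |: (supp y :\ a :\ b).
  apply/subsetP => j; rewrite !inE !mxE !inE.
  case: (eqVneq j c) => [->|jc] //=.
  case: (eqVneq j a) => [->|ja] /=; first by rewrite ya F2_11 eqxx.
  case: (eqVneq j b) => [->|jb] /=; first by rewrite yb F2_11 eqxx.
  by rewrite addr0.
have cS : #|supp y| = (#|supp y :\ a :\ b| + 2)%N.
  rewrite (cardsD1 a (supp y)) aS (cardsD1 b (supp y :\ a)) bS.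
  by rewrite add1n add1n addn2.
have wt' : (wt (y + w) <= m)%N.
  apply: leq_trans (subset_leq_card sub) _.
  rewrite cardsU1; move: Hm; rewrite /wt cS.
  case: (c \notin _) => /=; rewrite ?add0n ?add1n addn2 ltnS => H; exact: leq_trans H.
apply: (IH (y + w)) => //.
  exact: in_dualD.
apply: contra HyC => H.
have -> : y = (y + w) + w by rewrite -addrA F2mx_add addr0.
exact: in_dualD.
Qed.

Lemma ham_steiner n (C H : {vspace 'rV['F_2]_n}) :
  dual_Hamming H -> mon_equiv C H -> steiner C.
Proof.
move=> [m [G [_ HG Gnz Ginj Gsurj]]] [s Hs] a b ab.
set a' := (s^-1)%g a; set b' := (s^-1)%g b.
have sa : s a' = a by rewrite /a' permKV.
have sb : s b' = b by rewrite /b' permKV.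
have ab' : a' != b' by apply: contra ab => /eqP e; rewrite -sa -sb e.
set v := col a' G + col b' G.
have v0 : v != 0.
  apply: contra ab' => /eqP e; apply/eqP; apply: Ginj => /=.
  by rewrite -[col a' G]addr0 -(F2mx_add (col b' G)) addrA; move: e; rewrite /v => ->; rewrite add0r.
have [c' Hc'] := Gsurj v v0.
have ca' : c' != a'.
  apply/eqP => e; move: (Gnz b'); rewrite -[col b' G]add0r -(F2mx_add (col a' G)) -addrA.
  by rewrite -/v -Hc' e F2mx_add eqxx.
have cb' : c' != b'.
  apply/eqP => e; move: (Gnz a'); rewrite -[col a' G]addr0 -(F2mx_add (col b' G)) addrA.
  by rewrite -/v -Hc' e F2mx_add eqxx.
exists (s c'); split.
- by rewrite -sa (inj_eq (@perm_inj _ s)).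
- by rewrite -sb (inj_eq (@perm_inj _ s)).
apply/in_dualP => x xC.
have ac : a != s c' by rewrite -sa (inj_eq (@perm_inj _ s)) eq_sym.
have bc : b != s c' by rewrite -sb (inj_eq (@perm_inj _ s)) eq_sym.
rewrite dot_ind sum3 //.
have zH : permute s x \in H by rewrite -Hs.
move: zH; rewrite HG rows_rep => /submxP[u Hu].
have Ez j : x 0 (s j) = (u *m col j G) 0 0.
  have : permute s x 0 j = (u *m G) 0 j by rewrite Hu.
  by rewrite mxE => ->; rewrite !mxE; apply: eq_bigr => l _; rewrite !mxE.
rewrite -{1}sa -{1}sb !Ez.
transitivity ((u *m (v + col c' G)) 0 0); first by rewrite !mulmxDr !mxE.
by rewrite Hc' F2mx_add mulmx0 mxE.
Qed.

Lemma ind_dual_row n (C : {vspace 'rV['F_2]_n}) m (G : 'M['F_2]_(m, n)) (S : {set 'I_n}) :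
  rep C G -> in_dual C (ind S) = ((\sum_(j in S) row j G^T) == 0).
Proof.
move=> HC; rewrite (rep_dual _ HC).
have key i : (ind S *m G^T) 0 i = (\sum_(j in S) row j G^T) 0 i.
  rewrite summxE.
  transitivity (dot (row i G) (ind S)).
    by rewrite mxE dotC; apply: eq_bigr => l _; rewrite !mxE.
  by rewrite dot_ind; apply: eq_bigr => l _; rewrite !mxE.
apply/eqP/eqP => H; apply/rowP => i; move: (key i); rewrite H !mxE => ->; by [].
Qed.

Lemma ind_neq0 n (S : {set 'I_n}) j : j \in S -> ind S != 0.
Proof.
move=> jS; apply/eqP => /rowP /(_ j); rewrite !mxE jS.
by apply/eqP.
Qed.

Lemma ham_build n (C : {vspace 'rV['F_2]_n}) :
  dual_min_dist C 3 -> steiner C -> exists H, dual_Hamming H /\ mon_equiv C H.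
Proof.
move=> Hd HS.
set G := bmx C; set m := \dim C.
have HC : rep C G := bmx_rep C.
exists <<[seq row i G | i : 'I_m]>>%VS; split; last first.
  exists 1%g => x; rewrite rows_rep -HC; congr (_ \in C).
  by apply/rowP => j; rewrite /permute mxE perm1.
have rownz j : row j G^T != 0.
  apply/negP => /eqP H0.
  have Hy : in_dual C (ind [set j]) by rewrite (ind_dual_row _ HC) big_set1 H0.
  have := minW Hd Hy (ind_neq0 (set11 j)); rewrite wt_ind cards1.
  by [].
have Hsum : forall a b, row a G^T + row b G^T = 0 \/ exists c, row a G^T + row b G^T = row c G^T.
  move=> a b; case: (eqVneq a b) => [->|ab]; first by left; exact: F2mx_add.
  right; have [c [ca cb Hc]] := HS a b ab; exists c.
  have ac : a != c by rewrite eq_sym.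
  have bc : b != c by rewrite eq_sym.
  move: Hc; rewrite (ind_dual_row _ HC) (sum3 _ ab ac bc) => /eqP H.
  by rewrite -[LHS]addr0 -(F2mx_add (row c G^T)) addrA H add0r.
have surj : forall v : 'cV['F_2]_m, v != 0 -> exists j, col j G = v.
  move=> v v0.
  have rT : row_full G^T by rewrite /row_full mxrank_tr bmx_rank.
  have /submxP[u Hu] : (v^T <= G^T)%MS by exact: submx_full.
  have P : v^T = 0 \/ exists j, v^T = row j G^T.
    rewrite Hu mulmx_sum_row.
    apply: (big_ind (fun w => w = 0 \/ exists j, w = row j G^T)).
    - by left.
    - move=> x y [->|[a ->]] [->|[b ->]].
      + by left; rewrite addr0.
      + by right; exists b; rewrite add0r.
      + by right; exists a; rewrite addr0.
      + case: (Hsum a b) => [->|[c ->]]; [by left | by right; exists c].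
    - move=> j _; case: (F2_cases (u 0 j)) => ->; first by left; rewrite scale0r.
      by right; exists j; rewrite scale1r.
  case: P => [H0 | [j Hj]].
    by move: v0; rewrite -(trmxK v) H0 trmx0 eqxx.
  by exists j; apply: trmx_inj; rewrite Hj tr_col.
have colnz j : col j G != 0 by apply: contra (rownz j) => /eqP H; rewrite -tr_col H trmx0.
have Ginj : injective (fun j => col j G).
  move=> a b /= Hab; apply/eqP; apply: contraT => ab.
  have Hy : in_dual C (ind [set a; b]).
    rewrite (ind_dual_row _ HC).
    by rewrite big_setU1 ?inE //= big_set1 -!tr_col Hab F2mx_add.
  have := minW Hd Hy (ind_neq0 (setU11 a [set b])).
  by rewrite wt_ind cards2 ab.
exists m, G; split => //.
have E : [set col j G | j : 'I_n] = [set~ (0 : 'cV['F_2]_m)].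
  apply/setP => v; rewrite in_setC1; apply/imsetP/idP => [[j _ ->] | v0]; first exact: colnz.
  by have [j Hj] := surj v v0; exists j.
have Hc : #|[set col j G | j : 'I_n]| = n by rewrite card_imset ?card_ord.
by rewrite -Hc E cardsC1 card_mx card_Fp // muln1 subn1.

Qed.

Lemma dim_even n (C : {vspace 'rV['F_2]_n}) y0 :
  dual_min_dist C n -> in_dual C y0 -> y0 != 0 -> (\dim C).+1 = n.
Proof.
move=> Hd Hy0 y00.
set G := bmx C; set K := kermx G^T.
have rK : \rank K = (n - \dim C)%N by rewrite mxrank_ker mxrank_tr bmx_rank.
have dn : (\dim C <= n)%N by rewrite -bmx_rank rank_leq_col.
have sK : (K <= ind [set: 'I_n])%MS.
  apply/row_subP => i; set y := row i K.
  have Hy : in_dual C y by rewrite (rep_dual _ (bmx_rep C)) -sub_kermx row_sub.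
  case: (eqVneq y 0) => [->|yn0]; first exact: sub0mx.
  have hB : forall j, j \notin [set: 'I_n] -> y 0 j = 0 by move=> j; rewrite in_setT.
  have cT : (#|[set: 'I_n]| <= n)%N by rewrite cardsT card_ord.
  have [-> _] := small Hd Hy hB cT yn0.
  exact: submx_refl.
have r1 : (\rank K <= 1)%N.
  apply: leq_trans (mxrankS sK) _; rewrite rank_rV; exact: leq_b1.
have r2 : (1 <= \rank K)%N.
  have : (y0 <= K)%MS by rewrite sub_kermx -(rep_dual _ (bmx_rep C)).
  by move/mxrankS; rewrite rank_rV y00.
move: r1 r2; rewrite rK => r1 r2.
have : (n - \dim C)%N = 1%N by apply/eqP; rewrite eqn_leq r1 r2.
move: dn; clear; move: (\dim C) => k; lia.
Qed.

Definition cov_all n (C : {vspace 'rV['F_2]_n}) d :=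
  forall A : {set 'I_n}, #|A| = d.-1 -> exists i, i \notin A /\ in_dual C (ind (i |: A)).

Lemma supp_dual_wt n (C : {vspace 'rV['F_2]_n}) d :
  dual_min_dist C d -> exists y0, [/\ in_dual C y0, y0 = ind (supp y0) & #|supp y0| = d].
Proof.
case=> [[y [Hy _ wy]] _]; exists y; split => //; exact: ind_supp.
Qed.

Lemma no_big n (C : {vspace 'rV['F_2]_n}) d :
  dual_min_dist C d -> (5 <= d)%N -> (d < n)%N -> cov_all C d -> False.
Proof.
move=> Hd d5 dn Hcov.
have [y0 [Hy0 ey0 cB0]] := supp_dual_wt Hd.
set B0 := supp y0 in ey0 cB0.
have [c cB] : exists c, c \in ~: B0.
  apply/card_gt0P; have := cardsC B0; rewrite cB0 card_ord => E.
  move: #|~: B0| E => x E; lia.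
rewrite inE in cB.
have [b bB] : exists b, b \in B0 by apply/card_gt0P; rewrite cB0; move: d5; clear; lia.
have [b' bB'] : exists b', b' \in B0 :\ b.
  apply/card_gt0P; have := cardsD1 b B0; rewrite bB cB0 => E.
  move: d5 E; clear; move: #|B0 :\ b| => x; lia.
have bb' : b' != b by move: bB'; rewrite !inE => /andP[].
have bB'' : b' \in B0 by move: bB'; rewrite !inE => /andP[].
set A := c |: (B0 :\ b :\ b').
have cA : #|A| = d.-1.
  rewrite cardsU1.
  have -> : c \notin B0 :\ b :\ b' by rewrite !in_setD1 (negbTE cB) !andbF.
  have := cardsD1 b B0; rewrite bB cB0.
  have := cardsD1 b' (B0 :\ b); rewrite bB'.
  move: d5; clear; move: #|B0 :\ b :\ b'| #|B0 :\ b| => x z; simpl; lia.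
have [i [iA Hz]] := Hcov A cA.
set w := y0 + ind (i |: A).
have Hw : in_dual C w by apply: in_dualD.
have wn0 : w != 0.
  apply/eqP => /rowP /(_ c); rewrite !mxE ey0 !mxE (negbTE cB) !inE eqxx !orbT add0r.
  by apply/eqP.
have sub : supp w \subset b |: (b' |: (c |: [set i])).
  apply/subsetP => j; rewrite !inE.
  case: (eqVneq j b) => //= jb; case: (eqVneq j b') => //= jb'.
  case: (eqVneq j c) => //= jc; case: (eqVneq j i) => //= ji.
  rewrite /w ey0 !mxE.
  have -> : (j \in i |: A) = (j \in B0).
    by rewrite in_setU1 (negbTE ji) /A in_setU1 (negbTE jc) !in_setD1 jb jb'.
  by rewrite F2_add eqxx.
have c4 : (#|b |: (b' |: (c |: [set i]))| <= 4)%N.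
  rewrite !cardsU1 cards1.
  by move: (b \notin _) (b' \notin _) (c \notin _) => [] [] [].
have := minW Hd Hw wn0; rewrite /wt => H.
have := leq_trans H (leq_trans (subset_leq_card sub) c4).
by move: d5; clear; lia.
Qed.

Lemma card3 n (a b c : 'I_n) : (#|[set a; b; c]| <= 3)%N.
Proof.
have -> : [set a; b; c] = a |: (b |: [set c]) by apply/setP => x; rewrite !inE orbA.
rewrite !cardsU1 cards1.
by move: (a \notin _) (b \notin _) => [] [].
Qed.

Lemma lower_ham n (C D : {vspace 'rV['F_2]_n}) :
  steiner C -> (D <= C)%VS -> Supp D = [set: 'I_n] -> (\dim C <= \dim D)%N.
Proof.
move=> HS sDC SD; rewrite leqNgt; apply/negP => lt.
have [y [HyD HyC]] := perp_strict sDC lt.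
have [i Hi] := reduce sDC HS HyD HyC.
by move: Hi; apply/negP; apply: Supp_dual.
Qed.

Lemma lower_even n (C D : {vspace 'rV['F_2]_n}) y0 :
  odd n -> in_dual C y0 -> y0 = ind [set: 'I_n] ->
  (D <= C)%VS -> Supp D = [set: 'I_n] -> (0 < \dim D)%N -> (2 <= \dim D)%N.
Proof.
move=> on Hy0 ey0 sDC SD D0; rewrite ltnNge; apply/negP => D1.
have dD : \dim D = 1%N by apply/eqP; rewrite eqn_leq D1 D0.
set v := vpick D.
have vD : v \in D := memv_pick D.
have eD : <[v]>%VS = D.
  apply/eqP; rewrite -(dimv_leqif_eq _).2; first by rewrite dim_vline dD vpick0 -dimv_eq0 dD.
  by rewrite -memvE.
have ev : v = ind [set: 'I_n].
  rewrite {1}(ind_supp v); congr ind; apply/setP => i; rewrite in_setT inE.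
  have : i \in Supp D by rewrite SD in_setT.
  rewrite inE => /existsP[x /andP[]]; rewrite -eD => /vlineP[a ->].
  by rewrite mxE; apply: contra => /eqP ->; rewrite mulr0.
have vC : v \in C by move/subvP: sDC; apply.
move/in_dualP: Hy0 => /(_ v vC); rewrite ev ey0 dot_ind_ind cardsT card_ord on.
by move/eqP; rewrite (negbTE F2_10).
Qed.

Theorem mainTheorem9 (n k d : nat) (C : {vspace 'rV['F_2]_n}) :
  \dim C = k ->
  (exists y, in_dual C y /\ (y != 0)%R) ->
  dual_min_dist C d ->
  (3 <= d)%N ->
  let special :=
    (exists H : {vspace 'rV['F_2]_n}, dual_Hamming H /\ mon_equiv C H) \/
    [/\ k.+1 = n, d = n & odd n] in
  (special -> exists r, covering_dim C r /\ (r + d = k + 3)%N) /\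
  (~ special -> exists r, covering_dim C r /\ (r + d <= k + 2)%N).
Proof.
move=> Hk [y [Hy yn0]] Hd d3 special.
have [y0 [Hy0 ey0 cB0]] := supp_dual_wt Hd.
set B0 := supp y0 in ey0 cB0.
have dn : (d <= n)%N by rewrite -cB0 -[X in (_ <= X)%N]card_ord max_card.
have n0 : (0 < n)%N by apply: leq_trans dn; apply: leq_trans d3.
have [b bB] : exists b, b \in B0 by apply/card_gt0P; rewrite cB0; apply: leq_trans d3.
have [b' bB'] : exists b', b' \in B0 :\ b.
  apply/card_gt0P; have := cardsD1 b B0; rewrite bB cB0 => E.
  move: d3 E; move: #|B0 :\ b| => x; lia.
have bb' : b' != b by move: bB'; rewrite !inE => /andP[].
have bB'' : b' \in B0 by move: bB'; rewrite !inE => /andP[].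
have cA1 : #|B0 :\ b| = d.-1.
  have := cardsD1 b B0; rewrite bB cB0.
  move: #|B0 :\ b| => x; lia.
have cA2 : #|B0 :\ b :\ b'| = (d - 2)%N.
  have := cardsD1 b B0; rewrite bB cB0.
  have := cardsD1 b' (B0 :\ b); rewrite bB'.
  move: #|B0 :\ b :\ b'| #|B0 :\ b| => x z; simpl; lia.
have [D2 [sD2 dD2 SD2]] : exists D : {vspace 'rV['F_2]_n},
    [/\ (D <= C)%VS, (\dim D + (d - 2) <= k + 1)%N & Supp D = [set: 'I_n]].
  have [a0 a0A] : exists a0, a0 \in B0 :\ b :\ b'.
    by apply/card_gt0P; rewrite cA2; move: d3; clear; lia.
  have cl : (#|B0 :\ b :\ b'| < d)%N by rewrite cA2; move: d3; clear; lia.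
  have HA : forall i, i \notin B0 :\ b :\ b' -> #|i |: (B0 :\ b :\ b')| = d ->
      in_dual C (ind (i |: (B0 :\ b :\ b'))) -> ~~ odd d.
    move=> i _ ci _; exfalso.
    move: ci; rewrite cardsU1 cA2; move: (i \notin _) => [] /=; move: d3; clear; lia.
  have [D [sD dD SD]] := cons Hd a0A cl HA.
  exists D; split => //; rewrite -cA2 -Hk; exact: dD.
have [r [Hr rle]] := min_cov n0 sD2 SD2.
have Hr' := Hr; case: Hr' => [SC r0 [D [sD dD SD]] Hmin].
have bb : b != b' by rewrite eq_sym.
split.
  case => [[H [HH Hm]] | [kn dnn on]].
    have HS := ham_steiner HH Hm.
    have d3' : d = 3%N.
      have [c [cb cb' Hc]] := HS b b' bb.
      have bS : b \in [set b; b'; c] by rewrite !inE eqxx.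
      have := minW Hd Hc (ind_neq0 bS); rewrite wt_ind => H3.
      have := leq_trans H3 (card3 b b' c).
      by move: d3; clear; lia.
    exists r; split => //.
    have := lower_ham HS sD SD; rewrite dD Hk => kr.
    move: kr rle dD2; rewrite d3'; move: (\dim D2) => x; clear; lia.
  have eB : B0 = [set: 'I_n].
    by apply/eqP; rewrite eqEcard subsetT cardsT card_ord cB0 dnn /=.
  have ey0' : y0 = ind [set: 'I_n] by rewrite ey0 eB.
  have r0' : (0 < \dim D)%N by rewrite dD.
  have := lower_even on Hy0 ey0' sD SD r0'; rewrite dD => r2.
  exists r; split => //.
  move: r2 rle dD2 kn dnn; move: (\dim D2) => x; clear; lia.
move=> Hns.
suff [D3 [sD3 dD3 SD3]] : exists D3 : {vspace 'rV['F_2]_n},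
    [/\ (D3 <= C)%VS, (\dim D3 + d <= k + 2)%N & Supp D3 = [set: 'I_n]].
  have [r3 [Hr3 r3le]] := min_cov n0 sD3 SD3.
  exists r3; split => //.
  move: r3le dD3; move: (\dim D3) => x; clear; lia.
case: (boolP (odd d)) => od; last first.
  have HA : forall i, i \notin B0 :\ b -> #|i |: (B0 :\ b)| = d ->
      in_dual C (ind (i |: (B0 :\ b))) -> ~~ odd d by move=> *; exact: od.
  have cl : (#|B0 :\ b| < d)%N by rewrite cA1; move: d3; clear; lia.
  have [D4 [sD' dD' SD']] := cons Hd bB' cl HA.
  exists D4; split => //.
  move: dD'; rewrite cA1 Hk; move: (\dim D4) => x; move: d3; clear; lia.
case: (classic (cov_all C d)) => Hcov.
  exfalso; apply: Hns.
  case: (eqVneq d 3) => [d3e | dn3].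
    left; apply: ham_build; first by move: Hd; rewrite d3e.
    move=> a c ac; have cA : #|[set a; c]| = d.-1 by rewrite cards2 ac d3e.
    have [i [iA Hi]] := Hcov _ cA.
    move: iA; rewrite !inE negb_or => /andP[ia ic].
    exists i; split => //.
    have -> : [set a; c; i] = i |: [set a; c].
      by apply/setP => x; rewrite !inE; case: (x == a); case: (x == c); case: (x == i).
    exact: Hi.
  right.
  have d5 : (5 <= d)%N.
    move: d3 dn3 od; clear; case: d => [|[|[|[|[|d]]]]] //.
  case: (ltngtP d n) => [dlt | dgt | den].
  - by exfalso; apply: (no_big Hd d5 dlt Hcov).
  - by move: dn; rewrite leqNgt dgt.
  split => //.
  + rewrite -Hk; apply: (dim_even (y0 := y0)) => //.
      by move: Hd; rewrite den.
    by rewrite ey0; apply: (ind_neq0 bB).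
  + by rewrite -den.
have [A [cA HA']] : exists A : {set 'I_n}, #|A| = d.-1 /\
    forall i, i \notin A -> ~ in_dual C (ind (i |: A)).
  apply: NNPP => H; apply: Hcov => A cA; apply: NNPP => H2; apply: H.
  exists A; split => // i iA Hi; apply: H2; exists i; split => //.
have [a0 a0A] : exists a0, a0 \in A by apply/card_gt0P; rewrite cA; move: d3; clear; lia.
have cl : (#|A| < d)%N by rewrite cA; move: d3; clear; lia.
have HA : forall i, i \notin A -> #|i |: A| = d -> in_dual C (ind (i |: A)) -> ~~ odd d.
  by move=> i iA _ Hi; exfalso; exact: HA' iA Hi.
have [D4 [sD' dD' SD']] := cons Hd a0A cl HA.
exists D4; split => //.
move: dD'; rewrite cA Hk; move: (\dim D4) => x; move: d3; clear; lia.
Qed.
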